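(* Fix a utility call $\ell$ with anchor interval $[\underline u^{(a_\ell)},\overline u^{(a_\ell)}]$ and let $w_a:=\mathrm{logit}(\overline u^{(a_\ell)})-\mathrm{logit}(\underline u^{(a_\ell)})$. Assume the true comparison probability satisfies $p_\ell\in[\kappa,1-\kappa]$ for some $\kappa\in(0,\tfrac12]$, let $\eta>0$ satisfy $w_a<8\eta$, and choose $$K_\ell\ge\max\Big\{\frac{8\log(2/\delta_\ell)}{\kappa^2},\ \frac{32\log(2/\delta_\ell)}{\kappa^2(8\eta-w_a)^2}\Big\}.$$ Then on the event that $u^{(a_\ell)}(\overline y^{(a_\ell)})\in[\underline u^{(a_\ell)},\overline u^{(a_\ell)}]$ and $p_\ell\in[p^-_\ell,p^+_\ell]$, the transported interval satisfies $\overline u^{(i_\ell)}-\underline u^{(i_\ell)}\le2\eta$.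
   Context: Bradley–Terry utility model: each task–incumbent pair $(i,z)$ has a score $\theta^{(i)}(z)\in\mathbb R$, normalized so that a fixed reference has score $0$, and the utility is $u^{(i)}(z)=\sigma(\theta^{(i)}(z))$ with $\sigma(x)=1/(1+e^{-x})$, $\mathrm{logit}(p)=\log(p/(1-p))$ (with $\mathrm{logit}(0)=-\infty$, $\mathrm{logit}(1)=+\infty$, $\sigma(-\infty)=0$, $\sigma(+\infty)=1$). At utility call $\ell$, candidate task $i_\ell$ with incumbent $z$ is compared with anchor task $a_\ell$ with incumbent $z'$; the true comparison probability is $p_\ell=\sigma(\theta^{(i_\ell)}(z)-\theta^{(a_\ell)}(z'))$. One draws $K_\ell$ votes $b_{\ell,k}\in\{0,1\}$, conditionally independent with mean $p_\ell$; $\hat p_\ell:=K_\ell^{-1}\sum_kb_{\ell,k}$. With failure budget $\delta_\ell\in(0,1)$, let $\theta_p:=\sqrt{\log(2/\delta_\ell)/(2K_\ell)}$, $p^-_\ell:=\mathrm{clip}_{[0,1]}(\hat p_\ell-\theta_p)$, $p^+_\ell:=\mathrm{clip}_{[0,1]}(\hat p_\ell+\theta_p)$. Given an anchor interval $[\underline u^{(a_\ell)},\overline u^{(a_\ell)}]$, the transported interval is $\underline u^{(i_\ell)}:=\sigma(\mathrm{logit}(\underline u^{(a_\ell)})+\mathrm{logit}(p^-_\ell))$, $\overline u^{(i_\ell)}:=\sigma(\mathrm{logit}(\overline u^{(a_\ell)})+\mathrm{logit}(p^+_\ell))$. *)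

(* Defs.v *)
From HB Require Import structures.
From mathcomp Require Import all_boot all_order all_algebra.
From mathcomp Require Import all_classical all_reals all_analysis.
Set Implicit Arguments. Unset Strict Implicit. Unset Printing Implicit Defensive.
Import Order.TTheory GRing.Theory Num.Theory.
Local Open Scope ring_scope.

Definition sigma {R : realType} (x : R) : R := 1 / (1 + expR (- x)).

(* logit with values in the extended reals: logit 0 = -oo, logit 1 = +oo
   (for arguments outside [0,1] we extend by -oo below 0 and +oo above 1;
   in the theorem logit is only applied to clipped probabilities and to
   anchor endpoints). *)
Definition logit {R : realType} (p : R) : \bar R :=
  if p <= 0 then -oo%E
  else if 1 <= p then +oo%E
  else (ln (p / (1 - p)))%:E.

Definition sigmaE {R : realType} (x : \bar R) : R :=
  match x with
  | x%:E => sigma x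
  | +oo%E => 1
  | -oo%E => 0
  end.

Definition clip01 {R : realType} (x : R) : R := Num.min 1 (Num.max 0 x).

Definition phat {R : realType} (K : nat) (b : 'I_K -> bool) : R :=
  (\sum_(k < K) (b k : nat))%:R / K%:R.

Definition theta_p {R : realType} (K : nat) (delta : R) : R :=
  Num.sqrt (ln (2 / delta) / (2 * K%:R)).

Definition p_lo {R : realType} (K : nat) (b : 'I_K -> bool) (delta : R) : R :=
  clip01 (phat b - theta_p K delta).
Definition p_hi {R : realType} (K : nat) (b : 'I_K -> bool) (delta : R) : R :=
  clip01 (phat b + theta_p K delta).

Definition u_lo_transport {R : realType} (ua_lo : R) (pm : R) : R :=
  sigmaE (logit ua_lo + logit pm)%E.
Definition u_hi_transport {R : realType} (ua_hi : R) (pp : R) : R :=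
  sigmaE (logit ua_hi + logit pp)%E.

(* Main.v *)
Require Import Defs.
From HB Require Import structures.
From mathcomp Require Import all_boot all_order all_algebra.
From mathcomp Require Import all_classical all_reals all_analysis.
From mathcomp Require Import ring lra.
Import Order.TTheory GRing.Theory Num.Theory.
Local Open Scope ring_scope.

Lemma sigma_derive (R : realType) (c : R) :
  is_derive c 1 (@sigma R) (expR (-c) / (1 + expR (-c))^+2).
Proof.
have E : @sigma R = (fun y => (1 + expR (- y))^-1).
  by apply: funext => y; rewrite /sigma div1r.
rewrite E.
have h1 : is_derive c 1 (expR \o -%R) (expR (- c) * (-1)).
  exact: is_derive1_comp.
have h2 : is_derive c 1 (fun y : R => 1 + expR (- y)) (0 + expR (- c) * (-1)).
  have h0 : is_derive c 1 (cst (1:R)) 0 by exact: is_derive_cst.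
  have := is_deriveD h0 h1. by [].
have ne : 1 + expR (- c) != 0 by have := expR_gt0 (- c); lra.
have h3 := @is_deriveV R (fun y : R => 1 + expR (- y)) c _ 1 ne h2.
apply: (is_derive_eq h3).
rewrite /GRing.scale /=; field; exact: ne.
Qed.

Section H.
Context {R : realType}.
Implicit Types x y a b u v : R.

Lemma lnd_le a b : 0 < a -> 0 < b -> ln a - ln b <= a / b - 1.
Proof.
move=> a0 b0; rewrite -ln_div ?posrE //.
have := @le_ln1Dx R (a/b - 1); rewrite addrCA subrr addr0; apply.
have : 0 < a / b by rewrite divr_gt0.
lra.
Qed.

Lemma lg_split u : 0 < u < 1 -> ln (u / (1 - u)) = ln u - ln (1 - u).
Proof. move=> hu; rewrite ln_div ?posrE //; lra. Qed.

Lemma lg_ub u v : 0 < v -> v <= u -> u < 1 ->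
  ln (u / (1 - u)) - ln (v / (1 - v)) <= (u - v) * (1 / v + 1 / (1 - u)).
Proof.
move=> v0 vu u1.
have u0 : 0 < u by lra.
have v1 : 0 < 1 - v by lra.
have u1' : 0 < 1 - u by lra.
rewrite !lg_split; try lra.
have h1 := @lnd_le u v u0 v0.
have h2 := @lnd_le (1-v) (1-u) v1 u1'.
have e1 : u / v - 1 = (u - v) * (1 / v) by field; lra.
have e2 : (1 - v) / (1 - u) - 1 = (u - v) * (1 / (1 - u)) by field; lra.
lra.
Qed.

Lemma sigma_gt0 x : 0 < sigma x.
Proof. rewrite /sigma divr_gt0 //; have := expR_gt0 (- x); lra. Qed.

Lemma sigma_lt1 x : sigma x < 1.
Proof.
rewrite /sigma ltr_pdivrMr; have := expR_gt0 (- x); lra.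
Qed.

Lemma sigma_logit x : ln (sigma x / (1 - sigma x)) = x.
Proof.
have e := expR_gt0 (- x).
have -> : sigma x / (1 - sigma x) = (expR (- x))^-1.
  rewrite /sigma; field; apply/andP; split; lra.
by rewrite -expRN opprK expRK.
Qed.

Lemma sigma_lip x y : y <= x -> sigma x - sigma y <= (x - y) / 4.
Proof.
case: (ltgtP y x) => // [yx|->] _; last by rewrite !subrr mul0r.
case: (MVT yx (fun c _ => @sigma_derive R c)) => [|c _ ->].
  apply: derivable_within_continuous => z _; by case: (@sigma_derive R z).
have e := expR_gt0 (- c).
have : expR (- c) / (1 + expR (- c)) ^+ 2 <= 1 / 4.
  rewrite ler_pdivrMr; last nra.
  move: (expR (- c)) e => E e.
  have := sqr_ge0 (1 - E); nra.
move: (expR (- c) / (1 + expR (- c)) ^+ 2) => D HD.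
have : 0 < x - y by lra.
nra.
Qed.

Lemma logit_in u : 0 < u < 1 -> logit u = (ln (u / (1 - u)))%:E.
Proof.
move=> /andP [h0 h1]; rewrite /logit.
have -> : (u <= 0) = false by apply/negbTE; rewrite -ltNge.
have -> : (1 <= u) = false by apply/negbTE; rewrite -ltNge.
done.
Qed.

Lemma clip_cases x : (x <= 0 /\ clip01 x = 0) \/ (0 <= x <= 1 /\ clip01 x = x)
  \/ (1 <= x /\ clip01 x = 1).
Proof.
rewrite /clip01.
have hm : (x <= 0 /\ Num.max 0 x = 0) \/ (0 <= x /\ Num.max 0 x = x).
  rewrite maxr_absE; case: (ger0P (0 - x)) => h; [left|right]; split; lra.
case: hm => [[h1 ->]|[h1 ->]]; rewrite minr_absE.
  left; split => //; case: (ger0P (1 - 0)) => h; lra.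
case: (ger0P (1 - x)) => h.
  right; left; split; [apply/andP; split|]; lra.
right; right; split; lra.
Qed.

Lemma clip_lip a b : a <= b -> clip01 b - clip01 a <= b - a.
Proof.
move=> ab; case: (clip_cases a) => [[h ->]|[[h ->]|[h ->]]];
case: (clip_cases b) => [[h' ->]|[[h' ->]|[h' ->]]]; lra.
Qed.

Lemma sigma_mono x y : x <= y -> sigma x <= sigma y.
Proof.
move=> xy; have ex := expR_gt0 (- x); have ey := expR_gt0 (- y).
rewrite /sigma !div1r lef_pV2 ?posrE; try lra.
by rewrite lerD2l ler_expR lerN2.
Qed.

Lemma logit_nNy u : 0 < u -> logit u != -oo%E.
Proof.
move=> u0; rewrite /logit.
have -> : (u <= 0) = false by apply/negbTE; rewrite -ltNge.
by case: ifP.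
Qed.

Lemma logit_ny u : u < 1 -> logit u != +oo%E.
Proof.
move=> u1; rewrite /logit.
have -> : (1 <= u) = false by apply/negbTE; rewrite -ltNge.
by case: ifP.
Qed.

End H.

Theorem theoremC3 (R : realType)
  (theta_i theta_a : R)          (* theta^(i_l)(z), theta^(a_l)(z') *)
  (ua_lo ua_hi : R)              (* anchor interval *)
  (K : nat) (b : 'I_K -> bool)   (* the K_l votes *)
  (delta kappa eta : R) :
  0 < delta < 1 ->
  0 < kappa <= 1 / 2 ->
  kappa <= sigma (theta_i - theta_a) <= 1 - kappa ->
  0 < eta ->
  (logit ua_hi - logit ua_lo < (8 * eta)%:E)%E ->
  8 * ln (2 / delta) / kappa ^+ 2 <= K%:R ->
  32 * ln (2 / delta) /
    (kappa ^+ 2 * (8 * eta - fine (logit ua_hi - logit ua_lo)%E) ^+ 2) <= K%:R ->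
  (* the event *)
  ua_lo <= sigma theta_a <= ua_hi ->
  p_lo b delta <= sigma (theta_i - theta_a) <= p_hi b delta ->
  u_hi_transport ua_hi (p_hi b delta) - u_lo_transport ua_lo (p_lo b delta)
    <= 2 * eta.
Proof.
move=> /andP[d0 d1] /andP[k0 k2] /andP[pk1 pk2] e0 hw hK1 hK2 /andP[ua1 ua2] /andP[pl pu].
have sa0 := @sigma_gt0 R theta_a; have sa1 := @sigma_lt1 R theta_a.
have hi0 : 0 < ua_hi by lra.
have lo1 : ua_lo < 1 by lra.
have lo0 : 0 < ua_lo.
  rewrite ltNge; apply/negP => h; move: hw.
  rewrite [logit ua_lo]/logit h /= addey ?logit_nNy //.
have hi1 : ua_hi < 1.
  rewrite ltNge; apply/negP => h; move: hw.
  rewrite [logit ua_hi]/logit.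
  have -> : (ua_hi <= 0) = false by apply/negbTE; rewrite -ltNge.
  rewrite h addye //.
  by rewrite eqe_oppLR /= logit_ny.
rewrite !logit_in ?hi0 ?lo0 ?hi1 ?lo1 // -EFinB lte_fin in hw.
rewrite !logit_in ?hi0 ?lo0 ?hi1 ?lo1 // -EFinB /= in hK2.
move: hw hK2.
set A := ln (ua_hi / (1 - ua_hi)); set B := ln (ua_lo / (1 - ua_lo)) => hw hK2.
set p := sigma (theta_i - theta_a) in pk1 pk2 pl pu.
move: pl pu; rewrite /u_hi_transport /u_lo_transport.
set pm := p_lo b delta; set pp := p_hi b delta => pl pu.
set L := ln (2 / delta) in hK1 hK2 *.
have L0 : 0 < L by apply: ln_gt0; rewrite ltr_pdivlMr //; lra.
have kk0 : 0 < kappa ^+ 2 by rewrite exprn_gt0.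
have Kpos : 0 < K%:R :> R.
  have : 0 < 8 * L / kappa ^+ 2 by rewrite divr_gt0 //; lra.
  lra.
set D := 8 * eta - (A - B) in hK2.
have D0 : 0 < D by rewrite /D; lra.
set th := theta_p K delta.
have th0 : 0 <= th by apply: sqrtr_ge0.
have th2 : th ^+ 2 = L / (2 * K%:R).
  rewrite /th /theta_p -/L sqr_sqrtr // divr_ge0 //; lra.
rewrite ler_pdivrMr // in hK1.
rewrite ler_pdivrMr ?mulr_gt0 ?exprn_gt0 // in hK2.
have thk : th <= kappa / 4.
  have : th ^+ 2 <= (kappa / 4) ^+ 2.
    rewrite th2 ler_pdivrMr; last lra.
    rewrite expr_div_n.
    move: hK1; move: (kappa ^+ 2) (K%:R : R) kk0 Kpos => k2' K' ? ? ?.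
    nra.
  nra.
have thD : th <= kappa * D / 8.
  have : th ^+ 2 <= (kappa * D / 8) ^+ 2.
    rewrite th2 ler_pdivrMr; last lra.
    rewrite expr_div_n exprMn.
    move: hK2; move: (kappa ^+ 2) (D ^+ 2) (K%:R : R) kk0 Kpos => k2' D2 K' ? ? ?.
    nra.
  have : 0 <= kappa * D / 8 by rewrite divr_ge0 ?mulr_ge0 //; lra.
  nra.
have spread : pp - pm <= 2 * th.
  have := @clip_lip R (phat b - th) (phat b + th).
  rewrite /pp /pm /p_hi /p_lo -/th.
  move=> H; have := H ltac:(lra); lra.
have pm0 : kappa / 2 <= pm by lra.
have pp1 : pp <= 1 - kappa / 2 by lra.
have pm0' : 0 < pm by lra.
have pp1' : pp < 1 by lra.
have hub := @lg_ub R pp pm pm0' ltac:(lra) pp1'.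
rewrite (@logit_in R pp); last (apply/andP; split; lra).
rewrite (@logit_in R pm); last (apply/andP; split; lra).
rewrite !logit_in ?hi0 ?lo0 ?hi1 ?lo1 //.
rewrite -!EFinD /= -/A -/B.
set c := kappa^-1.
have kc : kappa * c = 1 by rewrite /c mulfV //; lra.
have c0 : 0 < c by rewrite /c invr_gt0.
have i1 : 1 / pm <= 2 * c.
  rewrite ler_pdivrMr //; nra.
have i2 : 1 / (1 - pp) <= 2 * c.
  rewrite ler_pdivrMr; nra.
have i0 : 0 <= 1 / pm + 1 / (1 - pp).
  rewrite addr_ge0 // divr_ge0 //; lra.
have : ln (pp / (1 - pp)) - ln (pm / (1 - pm)) <= D.
  apply: le_trans hub _.
  have i3 : 1 / pm + 1 / (1 - pp) <= 4 * c by lra.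
  move: (1 / pm + 1 / (1 - pp)) i0 i3 => s s0 s1.
  have : (pp - pm) * s <= 2 * th * (4 * c) by apply: ler_pM; lra.
  have : 8 * th * c <= kappa * c * D.
    have : th * c <= kappa * D / 8 * c by apply: ler_wpM2r; lra.
    lra.
  rewrite kc. lra.
rewrite /D => hP.
set x := A + _; set y := B + _.
case: (lerP y x) => xy.
  have := @sigma_lip R x y xy; rewrite /x /y; lra.
have := @sigma_mono R x y (ltW xy); lra.
Qed.
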